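(* Let $d = 2$ and $n \ge 1$. Every generalized epistemic state $(V,\vec v)$ on $n$ elementary systems has a corresponding toy stabilizer state, and every toy stabilizer state $\mathcal{S}$ on $n$ elementary systems has a corresponding generalized epistemic state. Furthermore, if the observables $\vec f, \vec g \in \mathbb{Z}_2^{2n}$ correspond to the toy Pauli operators $g', g''$ respectively, then $\vec f + \vec g$ corresponds to $g' g''$.
   Context: Generalized formalism ($d=2$): phase space $\Omega = \mathbb{Z}_2^{2n}$ with coordinates $\vec m = (q_1,p_1,\dots,q_n,p_n)^T$. An observable (quadrature variable) is a vector $\vec f \in \Omega$, evaluated on $\vec m$ as $\vec f^T \vec m \bmod 2$. The symplectic form is $\langle \vec f, \vec g\rangle = \sum_{i=1}^n (f_{2i-1} g_{2i} - f_{2i} g_{2i-1}) \bmod 2$; $\vec f,\vec g$ commute if $\langle \vec f,\vec g\rangle = 0$. A subspace $V\subseteq\Omega$ is isotropic if all its elements pairwise commute. A generalized epistemic state is a pair $(V,\vec v)$ with $V$ isotropic and $\vec v\in\Omega$ (valuation vector). Toy stabilizer formalism: let $\mathcal{X} = \mathrm{diag}(1,-1,1,-1)$, $\mathcal{Y} = \mathrm{diag}(1,-1,-1,1)$, $\mathcal{Z} = \mathrm{diag}(1,1,-1,-1)$ (so $\mathcal Y = \mathcal Z\mathcal X$), and the toy Pauli group $G_n = \{\alpha\, p_1\otimes\cdots\otimes p_n : p_i \in \{\mathbb{1}_4,\mathcal X,\mathcal Y,\mathcal Z\}, \alpha\in\{\pm1\}\}$, generated by $-\mathbb 1$ and $\mathcal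 X_k,\mathcal Z_k$ (acting as $\mathcal X,\mathcal Z$ on the $k$-th factor). Let $m: G_n \to P_n$ be the group homomorphism into the $n$-qubit Pauli group with $m(\mathcal X_k) = X_k$, $m(\mathcal Z_k) = Z_k$, $m(-\mathbb 1) = -\mathbb 1$; two elements $g,h\in G_n$ ''commute'' if $m(g)$ and $m(h)$ commute. A toy stabilizer state is a subgroup $\mathcal S\le G_n$ whose elements pairwise ''commute'' and which does not contain $-\mathbb 1$. Correspondence: an observable $\vec f$ corresponds to a toy Pauli operator $g = \alpha p_1\otimes\cdots\otimes p_n$ (with any $\alpha\in\{\pm 1\}$) if for each $j$: $(f_{2j-1},f_{2j}) = (0,0) \iff p_j = \mathbb 1$, $(0,1)\iff p_j = \mathcal Z$, $(1,0)\iff p_j=\mathcal X$, $(1,1)\iff p_j = \mathcal Y$. A stabilizer state $\mathcal S$ corresponds to a generalized state $(V,\vec v)$ (and vice versa) iff for each $\vec f\in V$ there is a corresponding $g = \alpha p_1\otimes\cdots\otimes p_n \in \mathcal S$ with $\alpha = (-1)^{\vec f^T \vec v}$. *)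

(* Defs.v *)
From HB Require Import structures.
From mathcomp Require Import all_boot all_order all_algebra.
From mathcomp Require Import zify.
Set Implicit Arguments. Unset Strict Implicit. Unset Printing Implicit Defensive.
Import GRing.Theory.
Local Open Scope ring_scope.

(* Coordinates (q_1,p_1,...,q_n,p_n); with 0-based indices, system j   *)
(* (j : 'I_n) has q_j at index 2j and p_j at index 2j+1.               *)

Definition phase (n : nat) := 'rV['F_2]_(2 * n).

Lemma q_idx_lt (n : nat) (j : 'I_n) : (2 * j < 2 * n)%N.
Proof. by rewrite ltn_pmul2l. Qed.

Lemma p_idx_lt (n : nat) (j : 'I_n) : (2 * j + 1 < 2 * n)%N.
Proof. have := ltn_ord j; lia. Qed.

Definition qc (n : nat) (f : phase n) (j : 'I_n) : 'F_2 :=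
  f 0 (Ordinal (q_idx_lt j)).
Definition pc (n : nat) (f : phase n) (j : 'I_n) : 'F_2 :=
  f 0 (Ordinal (p_idx_lt j)).

Definition fdot (n : nat) (f m : phase n) : 'F_2 :=
  \sum_(i < 2 * n) f 0 i * m 0 i.

Definition symp (n : nat) (f g : phase n) : 'F_2 :=
  \sum_(j < n) (qc f j * pc g j - pc f j * qc g j).

Definition commute_obs (n : nat) (f g : phase n) : Prop := symp f g = 0.

Definition subspace (n : nat) (V : {set phase n}) : Prop :=
  [/\ 0 \in V,
      (forall f g, f \in V -> g \in V -> f + g \in V) &
      (forall (a : 'F_2) f, f \in V -> a *: f \in V)].

Definition isotropic (n : nat) (V : {set phase n}) : Prop :=
  subspace V /\ forall f g, f \in V -> g \in V -> commute_obs f g.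

(* A generalized epistemic state is a pair (V, v) with V isotropic. *)

(* Toy operators on n elementary systems are diagonal 4^n x 4^n        *)
(* matrices; a diagonal matrix is represented by its diagonal, i.e. a  *)
(* function on basis labels {ffun 'I_n -> 'I_4}.  The tensor product   *)
(* of diagonal matrices has diagonal entry the product of the factor   *)
(* entries; the matrix product is the pointwise product of diagonals.  *)

Inductive pauli := PI | PX | PY | PZ.

Definition toy1 (a : pauli) (k : 'I_4) : int :=
  match a, nat_of_ord k with
  | PI, _ => 1
  | PX, 0%N => 1 | PX, 1%N => -1 | PX, 2%N => 1 | PX, _ => -1
  | PY, 0%N => 1 | PY, 1%N => -1 | PY, 2%N => -1 | PY, _ => 1
  | PZ, 0%N => 1 | PZ, 1%N => 1 | PZ, 2%N => -1 | PZ, _ => -1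
  end.

Definition toyop (n : nat) := {ffun {ffun 'I_n -> 'I_4} -> int}.

Definition toy_op (n : nat) (alpha : int) (p : 'I_n -> pauli) : toyop n :=
  [ffun k : {ffun 'I_n -> 'I_4} => alpha * \prod_(j < n) toy1 (p j) (k j)].

Definition toy_mul (n : nat) (g h : toyop n) : toyop n := [ffun k => g k * h k].
Definition toy_one (n : nat) : toyop n := [ffun _ => 1].
Definition toy_mone (n : nat) : toyop n := [ffun _ => -1].

Definition inG (n : nat) (g : toyop n) : Prop :=
  exists (alpha : int) (p : 'I_n -> pauli),
    (alpha = 1 \/ alpha = -1) /\ g = toy_op alpha p.

(* n-qubit operators: matrices indexed by computational basis states
   {ffun 'I_n -> bool}, with integer entries (the Pauli group generated by
   -1, X_k, Z_k has integer matrices). *)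
Definition qop (n : nat) := {ffun 'I_n -> bool} -> {ffun 'I_n -> bool} -> int.

Definition qmul (n : nat) (A B : qop n) : qop n :=
  fun x y => \sum_(z : {ffun 'I_n -> bool}) A x z * B z y.

Definition qX (x y : bool) : int := if x != y then 1 else 0.
Definition qZ (x y : bool) : int := if x == y then (if x then -1 else 1) else 0.
Definition qI (x y : bool) : int := if x == y then 1 else 0.
Definition mul2 (A B : bool -> bool -> int) (x y : bool) : int :=
  A x false * B false y + A x true * B true y.

(* image under m of a single-system label: m(X)=X, m(Z)=Z, m(Y)=m(Z X)=Z X *)
Definition mlab (a : pauli) : bool -> bool -> int :=
  match a with PI => qI | PX => qX | PZ => qZ | PY => mul2 qZ qX end.

Definition m_op (n : nat) (alpha : int) (p : 'I_n -> pauli) : qop n :=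
  fun x y => alpha * \prod_(j < n) mlab (p j) (x j) (y j).

Definition toy_commute (n : nat) (g h : toyop n) : Prop :=
  exists (a : int) (p : 'I_n -> pauli) (b : int) (q : 'I_n -> pauli),
    [/\ (a = 1 \/ a = -1), (b = 1 \/ b = -1),
        g = toy_op a p, h = toy_op b q &
        forall x y, qmul (m_op a p) (m_op b q) x y
                    = qmul (m_op b q) (m_op a p) x y].

Definition subgroupG (n : nat) (S : toyop n -> Prop) : Prop :=
  [/\ (forall g, S g -> inG g),
      S (toy_one n),
      (forall g h, S g -> S h -> S (toy_mul g h)) &
      (forall g, S g -> exists2 h, S h & toy_mul g h = toy_one n)].

Definition toy_stab_state (n : nat) (S : toyop n -> Prop) : Prop :=
  [/\ subgroupG S,
      (forall g h, S g -> S h -> toy_commute g h) &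
      ~ S (toy_mone n)].

Definition label_of (q p : 'F_2) : pauli :=
  match q == 0, p == 0 with
  | true, true => PI
  | true, false => PZ
  | false, true => PX
  | false, false => PY
  end.

Definition obs_corr_lab (n : nat) (f : phase n) (p : 'I_n -> pauli) : Prop :=
  forall j, p j = label_of (qc f j) (pc f j).

Definition obs_corr (n : nat) (f : phase n) (g : toyop n) : Prop :=
  exists (alpha : int) (p : 'I_n -> pauli),
    [/\ (alpha = 1 \/ alpha = -1), g = toy_op alpha p & obs_corr_lab f p].

Definition sgnF2 (x : 'F_2) : int := if x == 0 then 1 else -1.

Definition state_corr (n : nat) (S : toyop n -> Prop)
    (V : {set phase n}) (v : phase n) : Prop :=
  forall f, f \in V ->
    exists p : 'I_n -> pauli,
      obs_corr_lab f p /\ S (toy_op (sgnF2 (fdot f v)) p).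

(* Main.v *)
Require Import Defs.
From HB Require Import structures.
From mathcomp Require Import all_boot all_order all_algebra.
From mathcomp Require Import zify.
From Stdlib Require Import FunctionalExtensionality ClassicalEpsilon.
Set Implicit Arguments. Unset Strict Implicit. Unset Printing Implicit Defensive.
Import GRing.Theory.
Local Open Scope ring_scope.

Lemma F2P (x : 'F_2) : x = 0 \/ x = 1.
Proof. case: x => -[|[|k]] Hk; [left|right|by []]; exact/val_inj. Qed.

Lemma sgnF2D (x y : 'F_2) : sgnF2 (x + y) = sgnF2 x * sgnF2 y.
Proof. by case: (F2P x) => ->; case: (F2P y) => ->. Qed.

Lemma sgnF2_0 : sgnF2 0 = 1. Proof. by []. Qed.

Lemma sgnF2_sum n (F : 'I_n -> 'F_2) :
  sgnF2 (\sum_(j < n) F j) = \prod_(j < n) sgnF2 (F j).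
Proof. exact: (big_morph sgnF2 sgnF2D sgnF2_0). Qed.

Lemma sgnF2_eq1 (x : 'F_2) : sgnF2 x = 1 -> x = 0.
Proof. by case: (F2P x) => ->. Qed.

Definition lab n (f : phase n) : 'I_n -> pauli :=
  fun j => label_of (qc f j) (pc f j).

Lemma toy1_mul q1 p1 q2 p2 k :
  toy1 (label_of q1 p1) k * toy1 (label_of q2 p2) k =
  toy1 (label_of (q1 + q2) (p1 + p2)) k.
Proof.
case: (F2P q1) => ->; case: (F2P p1) => ->; case: (F2P q2) => ->;
case: (F2P p2) => ->; by case: k => -[|[|[|[|]]]].
Qed.

Lemma qcD n (f g : phase n) j : qc (f + g) j = qc f j + qc g j.
Proof. by rewrite /qc mxE. Qed.
Lemma pcD n (f g : phase n) j : pc (f + g) j = pc f j + pc g j.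
Proof. by rewrite /pc mxE. Qed.

Lemma toy_mulE n a b (f g : phase n) :
  toy_mul (toy_op a (lab f)) (toy_op b (lab g)) = toy_op (a * b) (lab (f + g)).
Proof.
apply/ffunP => k; rewrite !ffunE mulrACA -big_split /=; congr (_ * _).
by apply: eq_bigr => j _; rewrite /lab toy1_mul qcD pcD.
Qed.

Lemma lab0 n j : lab (0 : phase n) j = PI.
Proof. by rewrite /lab /qc /pc !mxE. Qed.

Lemma toy_op_lab0 n a : toy_op a (lab (0 : phase n)) = [ffun _ => a].
Proof.
apply/ffunP => k; rewrite !ffunE big1 ?mulr1 // => j _.
by rewrite lab0.
Qed.

Lemma toy1_0 a : toy1 a ord0 = 1. Proof. by case: a. Qed.

Lemma toy1_inj a b : (forall t, toy1 a t = toy1 b t) -> a = b.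
Proof.
move=> H; have h1 := H (@Ordinal 4 1 isT); have h2 := H (@Ordinal 4 2 isT).
by clear H; move: h1 h2; case: a; case: b.
Qed.

Lemma toy_op_inj n a b (p q : 'I_n -> pauli) :
  toy_op a p = toy_op b q -> a = b /\ (b != 0 -> p = q).
Proof.
move=> H.
have Hk (k : {ffun 'I_n -> 'I_4}) : a * \prod_(j < n) toy1 (p j) (k j) = b * \prod_(j < n) toy1 (q j) (k j).
  by have := congr1 (fun F : toyop n => F k) H; rewrite !ffunE.
have ab : a = b.
  have := Hk [ffun _ => ord0]; rewrite !big1 ?mulr1 // => j _; by rewrite ffunE toy1_0.
split=> // bn0; apply: functional_extensionality => j; apply: toy1_inj => t.
have := Hk [ffun i => if i == j then t else ord0].
rewrite (bigD1 j) //= (bigD1 (P:=predT) j) //= !ffunE eqxx.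
rewrite !big1 => [|i /negbTE ij|i /negbTE ij]; rewrite ?ffunE ?ij ?toy1_0 //.
rewrite !mulr1 ab => /eqP; rewrite (inj_eq (mulfI bn0)) => /eqP.
by [].
Qed.

Lemma label_of_I q p : label_of q p = PI -> q = 0 /\ p = 0.
Proof. by case: (F2P q) => ->; case: (F2P p) => ->. Qed.

Lemma phase_eq0 n (f : phase n) :
  (forall j, qc f j = 0 /\ pc f j = 0) -> f = 0.
Proof.
move=> H; apply/rowP => i; rewrite mxE.
have hj : (i./2 < n)%N.
  by rewrite ltn_half_double -mul2n.
have [hq hp] := H (Ordinal hj).
have hi := odd_double_half i.
case hodd: (odd i) hi => /= hi.
- rewrite -hp /pc; congr (f 0 _); apply: val_inj => /=; lia.
- rewrite -hq /qc; congr (f 0 _); apply: val_inj => /=; lia.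
Qed.

Lemma lab_eq0 n (f : phase n) : (forall j, lab f j = PI) -> f = 0.
Proof. by move=> H; apply: phase_eq0 => j; apply: label_of_I; apply: H. Qed.

Lemma fdotD n (f g v : phase n) : fdot (f + g) v = fdot f v + fdot g v.
Proof. by rewrite /fdot -big_split; apply: eq_bigr => i _; rewrite mxE mulrDl. Qed.

Lemma fdot0 n (v : phase n) : fdot 0 v = 0.
Proof. by rewrite /fdot big1 // => i _; rewrite mxE mul0r. Qed.

Lemma addvv n (f : phase n) : f + f = 0.
Proof.
apply/rowP => i; rewrite !mxE; by case: (F2P (f 0 i)) => ->; apply/eqP.
Qed.
Lemma qmul_m_op n a b (p q : 'I_n -> pauli) x y :
  qmul (m_op a p) (m_op b q) x y =
  a * b * \prod_(j < n) mul2 (mlab (p j)) (mlab (q j)) (x j) (y j).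
Proof.
rewrite /qmul /m_op.
transitivity (a * b * \sum_(z : {ffun 'I_n -> bool})
   \prod_(j < n) (mlab (p j) (x j) (z j) * mlab (q j) (z j) (y j))).
  rewrite mulr_sumr; apply: eq_bigr => z _; by rewrite big_split /= mulrACA.
congr (_ * _).
rewrite -(bigA_distr_bigA (fun j t => mlab (p j) (x j) t * mlab (q j) t (y j))).
by apply: eq_bigr => j _; rewrite big_bool /mul2 addrC.
Qed.

Lemma mul2_anti q1 p1 q2 p2 x y :
  mul2 (mlab (label_of q1 p1)) (mlab (label_of q2 p2)) x y =
  sgnF2 (q1 * p2 - p1 * q2) *
  mul2 (mlab (label_of q2 p2)) (mlab (label_of q1 p1)) x y.
Proof.
case: (F2P q1) => ->; case: (F2P p1) => ->; case: (F2P q2) => ->;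
case: (F2P p2) => ->; by case: x; case: y.
Qed.

Lemma mul2_nz a b : exists y, mul2 (mlab a) (mlab b) false y != 0.
Proof. by case: a; case: b; first [by exists false | by exists true]. Qed.

Lemma qmul_anti n a b (f g : phase n) x y :
  qmul (m_op a (lab f)) (m_op b (lab g)) x y =
  sgnF2 (symp f g) * qmul (m_op b (lab g)) (m_op a (lab f)) x y.
Proof.
rewrite !qmul_m_op /symp sgnF2_sum.
rewrite (eq_bigr _ (fun j _ => mul2_anti _ _ _ _ (x j) (y j))) big_split /=.
by rewrite [b * a]mulrC mulrCA.
Qed.

Lemma pick_nz (h : bool -> int) : (exists y, h y != 0) -> h (h true != 0) != 0.
Proof. move=> [[] hy]; first by rewrite hy. by case E: (h true != 0). Qed.

Lemma comm_iff n a b (f g : phase n) : a != 0 -> b != 0 ->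
  (forall x y, qmul (m_op a (lab f)) (m_op b (lab g)) x y =
               qmul (m_op b (lab g)) (m_op a (lab f)) x y) <-> symp f g = 0.
Proof.
move=> a0 b0; split; last first.
  by move=> H x y; rewrite qmul_anti H sgnF2_0 mul1r.
move=> H.
pose x0 : {ffun 'I_n -> bool} := [ffun _ => false].
pose y0 : {ffun 'I_n -> bool} :=
  [ffun j => mul2 (mlab (lab g j)) (mlab (lab f j)) false true != 0].
have nz : qmul (m_op b (lab g)) (m_op a (lab f)) x0 y0 != 0.
  rewrite qmul_m_op !mulf_neq0 //; apply/prodf_neq0 => j _; rewrite !ffunE.
  exact: (pick_nz (mul2_nz _ _)).
have := H x0 y0; rewrite qmul_anti.
case: (F2P (symp f g)) => // -> E; exfalso; move: nz E.
set P := qmul _ _ x0 y0; move=> nz E.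
have : P = 0 by move: E; rewrite /sgnF2 /= => E; lia.
by move/eqP; rewrite (negbTE nz).
Qed.

Lemma toy_one_lab0 n : toy_op 1 (lab (0 : phase n)) = toy_one n.
Proof. by rewrite toy_op_lab0; apply/ffunP => k; rewrite !ffunE. Qed.
Lemma toy_mone_lab0 n : toy_op (-1) (lab (0 : phase n)) = toy_mone n.
Proof. by rewrite toy_op_lab0; apply/ffunP => k; rewrite !ffunE. Qed.

Lemma part3 n (f g : phase n) (g' g'' : toyop n) :
  obs_corr f g' -> obs_corr g g'' -> obs_corr (f + g) (toy_mul g' g'').
Proof.
move=> [a [p [ha -> hp]]] [b [q [hb -> hq]]].
have -> : p = lab f by apply: functional_extensionality => j; rewrite hp.
have -> : q = lab g by apply: functional_extensionality => j; rewrite hq.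
exists (a * b), (lab (f + g)); split; last by [].
  by case: ha => ->; case: hb => ->; [left|right|right|left].
by rewrite toy_mulE.
Qed.

Lemma sgnF2_pm (x : 'F_2) : sgnF2 x = 1 \/ sgnF2 x = -1.
Proof. by case: (F2P x) => ->; [left|right]. Qed.

Lemma sgnF2_nz (x : 'F_2) : sgnF2 x != 0.
Proof. by case: (F2P x) => ->. Qed.

Lemma sgnF2_sq (x : 'F_2) : sgnF2 x * sgnF2 x = 1.
Proof. by case: (F2P x) => ->. Qed.

Lemma part1 n (V : {set phase n}) (v : phase n) : isotropic V ->
  exists S : toyop n -> Prop, toy_stab_state S /\ state_corr S V v.
Proof.
move=> [[V0 VD VZ] Vc].
pose S := fun h : toyop n => exists2 f, f \in V & h = toy_op (sgnF2 (fdot f v)) (lab f).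
exists S; split; last first.
  by move=> f fV; exists (lab f); split => //; exists f.
split.
- split.
  + move=> h [f fV ->]; exists (sgnF2 (fdot f v)), (lab f); split => //.
    exact: sgnF2_pm.
  + exists 0 => //; rewrite fdot0 sgnF2_0 toy_op_lab0.
    by apply/ffunP => k; rewrite !ffunE.
  + move=> h1 h2 [f fV ->] [g gV ->]; exists (f + g); first exact: VD.
    by rewrite toy_mulE fdotD sgnF2D.
  + move=> h [f fV ->]; exists (toy_op (sgnF2 (fdot f v)) (lab f)); first by exists f.
    rewrite toy_mulE addvv sgnF2_sq toy_op_lab0.
    by apply/ffunP => k; rewrite !ffunE.
- move=> h1 h2 [f fV ->] [g gV ->].
  exists (sgnF2 (fdot f v)), (lab f), (sgnF2 (fdot g v)), (lab g); split => //;
    try exact: sgnF2_pm.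
  by apply/comm_iff; [exact: sgnF2_nz|exact: sgnF2_nz|exact: Vc].
- move=> [f fV E].
  have : toy_op (-1) (lab (0 : phase n)) = toy_op (sgnF2 (fdot f v)) (lab f).
    by rewrite -E toy_op_lab0; apply/ffunP => k; rewrite !ffunE.
  move/toy_op_inj => [e1 e2].
  have f0 : f = 0.
    apply: lab_eq0 => j; rewrite -e2 ?lab0 //; exact: sgnF2_nz.
  by move: e1; rewrite f0 fdot0 sgnF2_0.
Qed.

Definition asb (P : Prop) : bool := if excluded_middle_informative P then true else false.
Lemma asbP (P : Prop) : reflect P (asb P).
Proof. by rewrite /asb; case: excluded_middle_informative => h; constructor. Qed.

Lemma part2 n (S : toyop n -> Prop) : toy_stab_state S ->
  exists (V : {set phase n}) (v : phase n), isotropic V /\ state_corr S V v.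
Proof.
move=> [[SG S1 SM SI] SC Sm].
pose V : {set phase n} := [set f | asb (exists a, S (toy_op a (lab f)))].
pose chi (f : phase n) : 'F_2 := if asb (S (toy_op (-1) (lab f))) then 1 else 0.
have U f : S (toy_op 1 (lab f)) -> S (toy_op (-1) (lab f)) -> False.
  move=> h1 h2; apply: Sm; have := SM _ _ h1 h2.
  by rewrite toy_mulE addvv mul1r toy_mone_lab0.
have A f : f \in V -> S (toy_op (sgnF2 (chi f)) (lab f)).
  rewrite inE => /asbP [a Sa].
  have [a' [p' [ha' E]]] := SG _ Sa.
  have [aa' _] := toy_op_inj E; rewrite /chi.
  case: asbP => // hm; case: ha' => ha'; rewrite aa' ha' in Sa => //.
have chi_char f c : f \in V -> S (toy_op (sgnF2 c) (lab f)) -> c = chi f.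
  move=> fV Sc; have Sf := A f fV.
  case: (F2P c) Sc => -> Sc; case: (F2P (chi f)) Sf => -> Sf //; exfalso;
    [exact: (U f Sc Sf)| exact: (U f Sf Sc)].
have inV f a : S (toy_op a (lab f)) -> f \in V.
  by move=> h; rewrite inE; apply/asbP; exists a.
have V0 : (0 : phase n) \in V.
  by apply: (inV _ 1); rewrite toy_one_lab0.
have VD f g : f \in V -> g \in V -> f + g \in V /\ chi (f + g) = chi f + chi g.
  move=> fV gV; have := SM _ _ (A f fV) (A g gV); rewrite toy_mulE -sgnF2D => h.
  have fgV := inV _ _ h; split => //; exact/esym/chi_char.
have VZ (a : 'F_2) f : f \in V -> a *: f \in V.
  by case: (F2P a) => ->; rewrite ?scale0r ?scale1r.
have chi0 : chi 0 = 0.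
  by apply/esym/chi_char => //; rewrite sgnF2_0 toy_one_lab0.
pose X := in_tuple (enum V).
pose UU : {vspace phase n} := <<X>>%VS.
have UV u : u \in UU -> u \in V.
  move/coord_span => ->.
  apply: (big_ind (fun w => w \in V)) => //; first by move=> x y xV yV; case: (VD x y xV yV).
  move=> i _; apply: VZ.
  have : X`_i \in X by apply: mem_nth; exact: ltn_ord.
  by rewrite mem_enum.
have VU u : u \in V -> u \in UU.
  by move=> uV; apply: memv_span; rewrite mem_enum.
pose psi (x : phase n) := chi (projv UU x).
have psiD x y : psi (x + y) = psi x + psi y.
  rewrite /psi raddfD.
  by case: (VD _ _ (UV _ (memv_proj UU x)) (UV _ (memv_proj UU y))).
have psi0 : psi 0 = 0 by rewrite /psi raddf0 chi0.
pose v : phase n := \row_i psi (delta_mx 0 i).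
have fdotE f : fdot f v = psi f.
  rewrite {2}(row_sum_delta f) (big_morph psi psiD psi0) /fdot.
  apply: eq_bigr => i _; rewrite mxE.
  by case: (F2P (f 0 i)) => ->; rewrite ?scale0r ?scale1r ?mul0r ?mul1r.
exists V, v; split.
  split; first by split => // f g fV gV; case: (VD f g fV gV).
  move=> f g fV gV.
  have [a [p [b [q [ha hb E1 E2 Hc]]]]] := SC _ _ (A f fV) (A g gV).
  have [_ e1] := toy_op_inj E1; have [_ e2] := toy_op_inj E2.
  have a0 : a != 0 by case: ha => ->.
  have b0 : b != 0 by case: hb => ->.
  rewrite -(e1 a0) -(e2 b0) in Hc.
  exact: (comm_iff _ _ a0 b0).1 Hc.
move=> f fV; exists (lab f); split => //.
by rewrite fdotE /psi projv_id ?VU //; apply: A.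
Qed.

Theorem mainTheorem3 (n : nat) (hn : (0 < n)%N) :
  [/\ (forall (V : {set phase n}) (v : phase n), isotropic V ->
         exists S : toyop n -> Prop, toy_stab_state S /\ state_corr S V v),
      (forall S : toyop n -> Prop, toy_stab_state S ->
         exists (V : {set phase n}) (v : phase n),
           isotropic V /\ state_corr S V v) &
      (forall (f g : phase n) (g' g'' : toyop n),
         obs_corr f g' -> obs_corr g g'' -> obs_corr (f + g) (toy_mul g' g''))].
Proof.
split; [exact: part1 | exact: part2 | exact: part3].
Qed.
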